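(* Let $p$ be an odd prime and $d\ge2$. Let $s_n$ denote the number of open subgroups of index at most $n$ in $SL_d(\mathbb Z_p)$. Then there are infinitely many positive integers $n$ with $s_n\ge n^{c}$, where $c=(3-2\sqrt2)d^2-2(2-\sqrt2)$.
   Context: $\mathbb Z_p$ denotes the ring of $p$-adic integers. *)

(* Defs.v *)
From HB Require Import structures.
From mathcomp Require Import all_boot all_order all_algebra.
From mathcomp Require boolp.

Set Implicit Arguments.
Unset Strict Implicit.
Unset Printing Implicit Defensive.

Import Order.TTheory GRing.Theory Num.Theory.
Local Open Scope ring_scope.

(* Z_p = lim_k Z/p^k Z : an element is a sequence (x_k)_k of integers  *)
(* with x_k = x_{k+1} mod p^k (hence 0 <= x_k < p^k, x_k the residue   *)
(* of the p-adic integer mod p^k).                                     *)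

Definition pk (p k : nat) : int := (p ^ k)%N%:Z.

Definition coherent (p : nat) (x : nat -> int) :=
  forall k, x k = (x k.+1 %% pk p k)%Z.

Record Zpadic (p : nat) := MkZp { zp_seq : nat -> int; zp_coh : coherent p zp_seq }.

HB.instance Definition _ p := boolp.gen_eqMixin (Zpadic p).
HB.instance Definition _ p := boolp.gen_choiceMixin (Zpadic p).

Lemma mod_mod_dvd (d e m : int) : ((m %% (d * e))%Z %% d)%Z = (m %% d)%Z.
Proof.
rewrite [in RHS](divz_eq m (d * e)).
have -> : (m %/ (d * e))%Z * (d * e) = ((m %/ (d * e))%Z * e) * d.
  by rewrite -mulrA [e * d]mulrC.
by rewrite modzMDl.
Qed.

Lemma pkS p k : pk p k.+1 = pk p k * p%:Z.
Proof. by rewrite /pk expnSr PoszM. Qed.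

Lemma mod_pkS p k (m : int) : ((m %% pk p k.+1)%Z %% pk p k)%Z = (m %% pk p k)%Z.
Proof. by rewrite pkS mod_mod_dvd. Qed.

Section ZpRing.
Variable p : nat.
Local Notation Z := (Zpadic p).

Lemma coh_mod (x : Z) k : (zp_seq x k %% pk p k)%Z = zp_seq x k.
Proof. by rewrite [in RHS](zp_coh x k) [in LHS](zp_coh x k) modz_mod. Qed.

Lemma zp_ext (x y : Z) : (forall k, zp_seq x k = zp_seq y k) -> x = y.
Proof.
case: x => x cx; case: y => y cy /= E.
have Exy : x = y by apply: boolp.funext. subst y.
by congr MkZp; apply: boolp.Prop_irrelevance.
Qed.

Lemma coh0 : coherent p (fun _ => 0).
Proof. by move=> k; rewrite mod0z. Qed.
Definition zp0 : Z := MkZp coh0.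

Lemma coh1 : coherent p (fun k => (1 %% pk p k)%Z).
Proof. by move=> k; rewrite mod_pkS. Qed.
Definition zp1 : Z := MkZp coh1.

Lemma cohD (x y : Z) :
  coherent p (fun k => (zp_seq x k + zp_seq y k) %% pk p k)%Z.
Proof.
move=> k; rewrite mod_pkS (zp_coh x k) (zp_coh y k).
by rewrite modzDml modzDmr.
Qed.
Definition zpD (x y : Z) : Z := MkZp (cohD x y).

Lemma cohN (x : Z) : coherent p (fun k => (- zp_seq x k) %% pk p k)%Z.
Proof. by move=> k; rewrite mod_pkS (zp_coh x k) modzNm. Qed.
Definition zpN (x : Z) : Z := MkZp (cohN x).

Lemma cohM (x y : Z) :
  coherent p (fun k => (zp_seq x k * zp_seq y k) %% pk p k)%Z.
Proof.
move=> k; rewrite mod_pkS (zp_coh x k) (zp_coh y k).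
by rewrite modzMml modzMmr.
Qed.
Definition zpM (x y : Z) : Z := MkZp (cohM x y).

Lemma zpDA : associative zpD.
Proof. by move=> x y z; apply: zp_ext => k /=; rewrite modzDml modzDmr addrA. Qed.
Lemma zpDC : commutative zpD.
Proof. by move=> x y; apply: zp_ext => k /=; rewrite addrC. Qed.
Lemma zp0D : left_id zp0 zpD.
Proof. by move=> x; apply: zp_ext => k /=; rewrite add0r coh_mod. Qed.
Lemma zpND : left_inverse zp0 zpN zpD.
Proof. by move=> x; apply: zp_ext => k /=; rewrite modzDml addNr mod0z. Qed.

HB.instance Definition _ := GRing.isZmodule.Build Z zpDA zpDC zp0D zpND.

Lemma zpMA : associative zpM.
Proof. by move=> x y z; apply: zp_ext => k /=; rewrite modzMml modzMmr mulrA. Qed.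
Lemma zpMC : commutative zpM.
Proof. by move=> x y; apply: zp_ext => k /=; rewrite mulrC. Qed.
Lemma zp1M : left_id zp1 zpM.
Proof. by move=> x; apply: zp_ext => k /=; rewrite modzMml mul1r coh_mod. Qed.
Lemma zpMDl : left_distributive zpM (@GRing.add Z).
Proof.
move=> x y z; apply: zp_ext => k /=.
by rewrite modzMml mulrDl modzDml modzDmr.
Qed.

HB.instance Definition _ := GRing.Zmodule_isComPzRing.Build Z zpMA zpMC zp1M zpMDl.

End ZpRing.

Section SLd.
Variables (p d : nat).
Local Notation M := ('M[Zpadic p]_d).

Definition inSL (A : M) : Prop := \det A = 1.

(* A = B mod p^m, i.e. the entries of A - B lie in p^m Z_p *)
Definition congr_mod (m : nat) (A B : M) : Prop :=
  forall i j, zp_seq (A i j) m = zp_seq (B i j) m.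

Definition is_openSL (U : M -> Prop) : Prop :=
  forall A, U A -> exists m : nat, forall B, inSL B -> congr_mod m A B -> U B.

Definition is_subgroupSL (H : M -> Prop) : Prop :=
  [/\ (forall A, H A -> inSL A),
      H 1%:M,
      (forall A B, H A -> H B -> H (A *m B)) &
      (forall A B, H A -> inSL B -> A *m B = 1%:M -> H B)].

Definition index_leSL (H : M -> Prop) (n : nat) : Prop :=
  exists g : 'I_n -> M, (forall i, inSL (g i)) /\
    forall A, inSL A -> exists i, exists h, H h /\ A = g i *m h.

Definition open_subgroup_index_le (H : M -> Prop) (n : nat) : Prop :=
  [/\ is_subgroupSL H, is_openSL H & index_leSL H n].

End SLd.

From Stdlib Require Reals.

Definition growth_exponent (d : nat) : Rdefinitions.R :=
  Rdefinitions.Rminus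
    (Rdefinitions.Rmult
       (Rdefinitions.Rminus (Raxioms.INR 3%N)
          (Rdefinitions.Rmult (Raxioms.INR 2%N) (R_sqrt.sqrt (Raxioms.INR 2%N))))
       (Raxioms.INR (d * d)))
    (Rdefinitions.Rmult (Raxioms.INR 2%N)
       (Rdefinitions.Rminus (Raxioms.INR 2%N) (R_sqrt.sqrt (Raxioms.INR 2%N)))).

(* Main.v *)
Require Import Defs.
From Stdlib Require Reals.
Module RealPart.
From Stdlib Require Import Reals Lra Psatz Lia.
Local Open Scope R_scope.

Lemma real_ineq (d D u : nat) : (d * d = D + 1)%nat -> (1 <= u)%nat ->
  (2 * D * D <= u * u)%nat -> ((u - 1) * (u - 1) < 2 * D * D)%nat ->
  (u <= 2 * D)%nat -> (D <= u)%nat ->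
  growth_exponent d * INR (d * d + (u - D)) <= INR ((u - D) * (2 * D - u)).
Proof.
intros hd hu h1 h2 h3 h4.
unfold growth_exponent.
rewrite hd.
rewrite !mult_INR, !plus_INR, !minus_INR by lia.
apply le_INR in h1; rewrite !mult_INR in h1.
apply lt_INR in h2; rewrite !mult_INR, minus_INR in h2 by lia.
assert (e3 : INR 3 = 3) by (simpl; lra).
assert (e2 : INR 2 = 2) by (simpl; lra).
assert (e1 : INR 1 = 1) by (simpl; lra).
rewrite e3, e2, e1 in *.
assert (hdd : INR d * INR d = INR D + 1) by (rewrite <- mult_INR, hd, plus_INR; simpl; lra).
rewrite hdd, mult_INR, e2.
set (s := sqrt 2).
assert (hs : s * s = 2) by (apply sqrt_sqrt; lra).
assert (hs0 : 0 <= s) by (apply sqrt_pos).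
assert (hs1 : 1 <= s) by nra.
set (x := INR D) in *. set (y := INR u) in *.
assert (hx : 0 <= x) by apply pos_INR.
assert (hy : 0 <= y) by apply pos_INR.
set (w := s * x).
assert (hw : w * w = 2 * x * x) by (unfold w; nra).
assert (hw0 : 0 <= w) by (unfold w; nra).
assert (hwx : x <= w) by (unfold w; nra).
assert (hwy : w <= y) by (destruct (Rle_or_lt w y) as [H|H]; [exact H| nra]).
assert (hyw : y - 1 < w) by (destruct (Rle_or_lt w (y - 1)) as [H|H]; [nra| exact H]).
replace ((3 - 2 * s) * (x + 1) - 2 * (2 - s)) with (3 * x - 2 * w - 1) by (unfold w; ring).
nra.
Qed.

Lemma rpow_bound (P mm E K : nat) (c : R) : (1 < P)%nat ->
  c * INR E <= INR K ->
  Rpower (INR P ^ (mm * E)) c <= INR P ^ (mm * K).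
Proof.
intros hP hc.
assert (P0 : 0 < INR P) by (apply (lt_INR 0); lia).
assert (lP : 0 < ln (INR P)).
{ rewrite <- ln_1; apply ln_increasing; [lra|]. apply (lt_INR 1) in hP; simpl in hP; lra. }
unfold Rpower.
rewrite ln_pow by exact P0.
rewrite <- (exp_ln (INR P ^ (mm * K))) by (apply pow_lt; exact P0).
rewrite ln_pow by exact P0.
assert (hm : 0 <= INR mm) by apply pos_INR.
assert (h : c * (INR (mm * E) * ln (INR P)) <= INR (mm * K) * ln (INR P)).
{ rewrite !mult_INR.
  replace (c * (INR mm * INR E * ln (INR P))) with ((INR mm * ln (INR P)) * (c * INR E)) by ring.
  replace (INR mm * INR K * ln (INR P)) with ((INR mm * ln (INR P)) * INR K) by ring.
  apply Rmult_le_compat_l; [nra | exact hc]. }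
destruct (Rle_lt_or_eq_dec _ _ h) as [hl|he].
- left; apply exp_increasing; exact hl.
- rewrite he; right; reflexivity.
Qed.

End RealPart.

From HB Require Import structures.
From mathcomp Require Import all_boot all_order all_algebra.
From Stdlib Require Reals.
From mathcomp Require boolp.
From Stdlib Require Lia.


From mathcomp Require Import ring zify.
Set Implicit Arguments.
Unset Strict Implicit.
Unset Printing Implicit Defensive.
Import Order.TTheory GRing.Theory Num.Theory.
Local Open Scope ring_scope.

Lemma intZp_mod (n : nat) (z : int) : (1 < n)%N ->
  (((z %% n%:Z)%Z)%:~R : 'Z_n) = z%:~R.
Proof.
move=> n1; rewrite /modz intrB intrM.
have -> : ((n%:Z)%:~R : 'Z_n) = 0 by apply: (pchar_Zp n1).
by rewrite mulr0 subr0.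
Qed.

Section Red.
Variables (p k : nat).
Hypothesis pk1 : (1 < p ^ k)%N.
Definition red (h : (1 < p ^ k)%N) (x : Zpadic p) : 'Z_(p ^ k) := (zp_seq x k)%:~R.

Lemma red_nmod : nmod_morphism (red pk1).
Proof.
split; first by [].
by move=> x y; rewrite /red /= intZp_mod // intrD.
Qed.
Lemma red_mon : monoid_morphism (red pk1).
Proof.
split; first by rewrite /red /= intZp_mod.
by move=> x y; rewrite /red /= intZp_mod // intrM.
Qed.
HB.instance Definition _ := GRing.isNmodMorphism.Build _ _ (red pk1) red_nmod.
HB.instance Definition _ := GRing.isMonoidMorphism.Build _ _ (red pk1) red_mon.
End Red.


Section Basic.
Variable p : nat.
Hypothesis p_gt1 : (1 < p)%N.

Lemma pk_gt0 k : (0 < pk p k)%R.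
Proof. by rewrite /pk ltz_nat expn_gt0 (ltnW p_gt1). Qed.

Lemma coh_le (x : Zpadic p) m j :
  zp_seq x m = (zp_seq x (m + j) %% pk p m)%Z.
Proof.
elim: j => [|j IH]; first by rewrite addn0 coh_mod.
rewrite IH (zp_coh x (m + j)) addnS.
have -> : pk p (m + j) = ((p ^ m)%N%:Z * (p ^ j)%N%:Z)%R by rewrite /pk expnD PoszM.
by rewrite mod_mod_dvd.
Qed.

Lemma zp_range (x : Zpadic p) k : (0 <= zp_seq x k)%R /\ (zp_seq x k < pk p k)%R.
Proof.
rewrite -coh_mod; split; first by rewrite modz_ge0 // gt_eqF // pk_gt0.
by rewrite ltz_pmod // pk_gt0.
Qed.

Lemma cast_val (n : nat) (z : int) : (1 < n)%N -> (0 <= z)%R -> (z < n%:Z)%R ->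
  val (z%:~R : 'Z_n) = absz z.
Proof.
move=> n1; case: z => // a _; rewrite ltz_nat => an.
by rewrite /= val_Zp_nat // modn_small.
Qed.

Lemma red_inj k (h : (1 < p ^ k)%N) (x y : Zpadic p) :
  red h x = red h y -> zp_seq x k = zp_seq y k.
Proof.
rewrite /red => /(congr1 val).
have [x0 x1] := zp_range x k; have [y0 y1] := zp_range y k.
rewrite !cast_val // => E.
by rewrite -(gez0_abs x0) -(gez0_abs y0) E.
Qed.

End Basic.


Lemma cast_inj (n : nat) (a b : int) : (1 < n)%N ->
  (a%:~R : 'Z_n) = b%:~R -> (a %% n%:Z = b %% n%:Z)%Z.
Proof.
move=> n1; rewrite -(intZp_mod a n1) -(intZp_mod b n1) => /(congr1 val).
have n0 : n%:Z != 0 by rewrite eqz_nat -lt0n ltnW.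
rewrite !cast_val // ?modz_ge0 ?ltz_pmod // ?ltz_nat ?(ltnW n1) // => E.
by rewrite -(gez0_abs (modz_ge0 a n0)) -(gez0_abs (modz_ge0 b n0)) E.
Qed.

Lemma uniq_inv (R : comPzRingType) (x a b : R) : x * a = 1 -> x * b = 1 -> a = b.
Proof. by move=> e1 e2; rewrite -[a]mul1r -e2 mulrAC e1 mul1r. Qed.

Section Unit.
Variable p : nat.
Hypothesis pp : prime p.
Let p_gt1 : (1 < p)%N := prime_gt1 pp.

Lemma pk_gt1 k : (0 < k)%N -> (1 < p ^ k)%N.
Proof. by move=> k0; rewrite -(expn0 p) ltn_exp2l. Qed.

Lemma inv_k (x : Zpadic p) k : (0 < k)%N -> ~~ (p %| absz (zp_seq x k))%N ->
  exists y : int, ((0 <= y) && (y < pk p k)) /\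
    ((zp_seq x k * y) %% pk p k = 1 %% pk p k)%Z.
Proof.
move=> k0 ndv; have hn := pk_gt1 k0.
pose a := absz (zp_seq x k).
pose X := (a%:R : 'Z_(p ^ k)).
have uX : X \is a GRing.unit.
  by rewrite unitZpE // coprime_pexpl // prime_coprime.
exists ((val (X^-1) : nat)%:Z); split.
  have lt : (val (X^-1) < p ^ k)%N.
    by apply: (leq_trans (ltn_ord _)); rewrite (Zp_cast hn).
  by rewrite /pk ltz_nat lt.
apply: cast_inj => //.
have [x0 _] := zp_range p_gt1 x k.
rewrite -(gez0_abs x0) -/a intrM /= -/X.
have e1 : ((a%:Z)%:~R : 'Z_(p ^ k)) = X by [].
have e2 : (((val (X^-1) : nat)%:Z)%:~R : 'Z_(p ^ k)) = X^-1 by exact: natr_Zp.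
by rewrite e1 e2 mulrV.
Qed.

Lemma unit_zp (x : Zpadic p) m : (0 < m)%N -> zp_seq x m = 1 ->
  exists y, x * y = 1.
Proof.
move=> m0 xm.
have x1 : zp_seq x 1 = 1.
  have := coh_le x 1 m.-1; rewrite add1n prednK // xm.
  by rewrite /pk expn1 modz_small // ltz_nat p_gt1.
have nd : forall k, (0 < k)%N -> ~~ (p %| absz (zp_seq x k))%N.
  move=> k k0; apply/negP => dv.
  have := coh_le x 1 k.-1; rewrite add1n prednK // x1 /pk expn1.
  have /dvdz_mod0P -> : (p%:Z %| zp_seq x k)%Z by rewrite dvdzE.
  by [].
have ex : forall k, exists y : int,
   (k = 0%N -> y = 0) /\ ((0 < k)%N -> ((0 <= y) && (y < pk p k)) /\
    ((zp_seq x k * y) %% pk p k = 1 %% pk p k)%Z).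
  case=> [|k]; first by exists 0; split.
  have [y [ry ey]] := inv_k (ltn0Sn k) (nd _ (ltn0Sn k)).
  by exists y; split.
have [f Hf] := boolp.choice ex.
have coh : coherent p f.
  case=> [|k].
    by have [h0 _] := Hf 0%N; rewrite h0 // /pk expn0 modz1.
  have [_ /(_ (ltn0Sn k)) [r1 e1]] := Hf k.+1.
  have [_ /(_ (ltn0Sn k.+1)) [r2 e2]] := Hf k.+2.
  have hn := pk_gt1 (ltn0Sn k).
  have eq1 : ((zp_seq x k.+1)%:~R : 'Z_(p ^ k.+1)) * (f k.+1)%:~R = 1.
    by rewrite -intrM -(intZp_mod _ hn) [X in X%:~R]e1 (intZp_mod _ hn).
  have eq2 : ((zp_seq x k.+1)%:~R : 'Z_(p ^ k.+1)) * (f k.+2)%:~R = 1.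
    have := congr1 (fun z => (z %% pk p k.+1)%Z) e2; rewrite /= !mod_pkS.
    move=> e2'; rewrite (zp_coh x k.+1) (intZp_mod _ hn) -intrM.
    by rewrite -(intZp_mod _ hn) [X in X%:~R]e2' (intZp_mod _ hn).
  have : ((f k.+1)%:~R : 'Z_(p ^ k.+1)) = (f k.+2)%:~R.
    exact: uniq_inv eq1 eq2.
  move/(cast_inj hn); rewrite -/(pk p k.+1) => <-.
  by rewrite modz_small.
exists (MkZp coh); apply: zp_ext => k /=.
case: k => [|k]; first by rewrite /pk expn0 !modz1.
by have [_ /(_ (ltn0Sn k)) [_ ->]] := Hf k.+1.
Qed.
End Unit.


Section Main.
Variables (p m e : nat).
Local Notation dd := e.+1.
Hypothesis pp : prime p.
Let p_gt1 : (1 < p)%N := prime_gt1 pp.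
Hypothesis m_gt0 : (0 < m)%N.

Lemma h1 : (1 < p ^ m)%N.
Proof. by rewrite -(expn0 p) ltn_exp2l // lt0n -lt0n. Qed.
Lemma h2 : (1 < p ^ (m + m))%N.
Proof. by rewrite -(expn0 p) ltn_exp2l // addn_gt0 m_gt0. Qed.

Local Notation q := (p ^ m)%N.
Local Notation Zk := 'Z_(p ^ (m + m)).
Local Notation M := 'M[Zpadic p]_dd.
Local Notation r1 := (red h1).
Local Notation r2 := (red h2).

Definition rho (A : M) : 'M[Zk]_dd := map_mx r2 A.
Definition Y (A : M) : 'M[Zk]_dd := rho A - 1%:M.
Definition G1 (A : M) : Prop := map_mx r1 A = 1%:M.

Lemma qq0 : (q%:R : Zk) * q%:R = 0.
Proof. by rewrite -natrM -expnD pchar_Zp // h2. Qed.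

Lemma qI_of (x y : Zpadic p) : zp_seq x m = zp_seq y m ->
  exists t : Zk, r2 x - r2 y = q%:R * t.
Proof.
move=> E.
have Ex := coh_le x m m; have Ey := coh_le y m m.
exists (((zp_seq x (m + m) %/ pk p m)%Z - (zp_seq y (m + m) %/ pk p m)%Z)%:~R).
rewrite /red -intrB.
rewrite [X in X - _](divz_eq (zp_seq x (m + m)) (pk p m)).
rewrite [X in _ - X](divz_eq (zp_seq y (m + m)) (pk p m)).
rewrite -Ex -Ey E.
rewrite (_ : (q%:R : Zk) = (pk p m)%:~R) // -intrM; congr (_%:~R).
by ring.
Qed.

Lemma f1ij (R S : pzRingType) (f : {rmorphism R -> S}) n (i j : 'I_n) :
  f ((1%:M : 'M[R]_n) i j) = (1%:M : 'M[S]_n) i j.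
Proof. by rewrite !mxE rmorphMn rmorph1. Qed.

Lemma G1_entry (A : M) : G1 A -> forall i j, zp_seq (A i j) m = zp_seq ((1%:M : M) i j) m.
Proof.
move=> GA i j; apply: (@red_inj _ p_gt1 _ h1).
by rewrite f1ij -GA mxE.
Qed.

Lemma Yq (A : M) : G1 A -> forall i j, exists t : Zk, Y A i j = q%:R * t.
Proof.
move=> GA i j; have [t Et] := qI_of (G1_entry GA i j).
by exists t; rewrite /Y /rho !mxE -Et f1ij mxE.
Qed.
Lemma Ymul (A B : M) : G1 A -> G1 B -> Y (A *m B) = Y A + Y B.
Proof.
move=> GA GB.
have E : rho (A *m B) = (1%:M + Y A) *m (1%:M + Y B).
  by rewrite /Y /rho map_mxM !(addrC 1%:M) !subrK.
have Z : Y A *m Y B = 0.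
  apply/matrixP => i j; rewrite !mxE big1 // => l _.
  have [t1 ->] := Yq GA i l; have [t2 ->] := Yq GB l j.
  by rewrite mulrACA qq0 mul0r.
rewrite {1}/Y E; move: Z; move: (Y A) (Y B) => a b Z.
rewrite mulmxDl !mulmxDr Z addr0 !mul1mx mulmx1.
by rewrite addrAC [1%:M + b]addrC addrK addrC.
Qed.

Lemma G1mul (A B : M) : G1 A -> G1 B -> G1 (A *m B).
Proof. by move=> GA GB; rewrite /G1 map_mxM GA GB mul1mx. Qed.

Definition pos (i : nat) : 'I_dd * 'I_dd := (inord (i %/ dd), inord (i %% dd)).
Definition Yat (Z : 'M[Zk]_dd) (i : nat) : Zk := Z (pos i).1 (pos i).2.

Variables r t : nat.
Definition Phi := {ffun 'I_t * 'I_r -> 'I_q}.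

Definition graph (phi : Phi) (Z : 'M[Zk]_dd) : Prop :=
  forall b : 'I_t, Yat Z (r + b)%N = \sum_(s < r) ((phi (b, s) : nat)%:R * Yat Z s).

Definition Hgr (phi : Phi) (A : M) : Prop :=
  [/\ inSL A, G1 A & graph phi (Y A)].

Lemma graph0 phi : graph phi 0.
Proof. by move=> b; rewrite /Yat mxE big1 // => s _; rewrite mxE mulr0. Qed.

Lemma graphD phi Z1 Z2 : graph phi Z1 -> graph phi Z2 -> graph phi (Z1 + Z2).
Proof.
move=> g1 g2 b; rewrite /Yat mxE -/(Yat _ _) g1 -/(Yat _ _) g2 -big_split /=.
by apply: eq_bigr => s _; rewrite /Yat mxE mulrDr.
Qed.

Lemma graphN phi Z : graph phi Z -> graph phi (- Z).
Proof.
move=> g b; rewrite /Yat mxE -/(Yat _ _) g -sumrN.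
by apply: eq_bigr => s _; rewrite /Yat mxE mulrN.
Qed.

Lemma Y1 : Y 1%:M = 0.
Proof. by rewrite /Y /rho map_mx1 subrr. Qed.

Lemma G1_1 : G1 1%:M.
Proof. by rewrite /G1 map_mx1. Qed.

Lemma Hgr_subgroup phi : is_subgroupSL (Hgr phi).
Proof.
split.
- by move=> A [].
- by split; [exact: det1 | exact: G1_1 | rewrite Y1; exact: graph0].
- move=> A B [sA gA grA] [sB gB grB]; split.
  + by rewrite /inSL det_mulmx sA sB mulr1.
  + exact: G1mul.
  + by rewrite Ymul //; apply: graphD.
- move=> A B [sA gA grA] sB AB1.
  have gB : G1 B.
    by move: (congr1 (map_mx r1) AB1); rewrite map_mxM gA mul1mx map_mx1.
  have YB : Y B = - Y A.
    by apply/eqP; rewrite -addr_eq0 addrC -Ymul // AB1 Y1.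
  by split=> //; rewrite YB; apply: graphN.
Qed.

Lemma Hgr_open phi : is_openSL (Hgr phi).
Proof.
move=> A [sA gA grA]; exists (m + m)%N => B sB cAB.
have rAB : rho B = rho A.
  by apply/matrixP => i j; rewrite !mxE /red cAB.
have gB : G1 B.
  rewrite /G1 -gA; apply/matrixP => i j; rewrite !mxE /red.
  by rewrite (coh_le (A i j) m m) (coh_le (B i j) m m) cAB.
by split=> //; rewrite /Y rAB.
Qed.


Definition pick (P : M -> Prop) : M :=
  match boolp.pselect (exists x, P x) with
  | left h => proj1_sig (boolp.cid h)
  | right _ => 1%:M end.

Lemma pickP (P : M -> Prop) : (exists x, P x) -> P (pick P).
Proof.
move=> h; rewrite /pick; case: boolp.pselect => [h'|//].
exact: (proj2_sig (boolp.cid h')).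
Qed.

Lemma pick_SL (P : M -> Prop) : (forall x, P x -> inSL x) -> inSL (pick P).
Proof.
move=> h; rewrite /pick; case: boolp.pselect => [h'|_]; last exact: det1.
exact/h/(proj2_sig (boolp.cid h')).
Qed.

Lemma adj_inv (g : M) : inSL g ->
  [/\ g *m \adj g = 1%:M, \adj g *m g = 1%:M & inSL (\adj g)].
Proof.
move=> sg; have e1 : g *m \adj g = 1%:M by rewrite mul_mx_adj sg.
have e2 : \adj g *m g = 1%:M by rewrite mul_adj_mx sg.
split=> //; move: (congr1 determinant e2); rewrite det_mulmx sg mulr1 det1.
by [].
Qed.

Definition delta (phi : Phi) (Z : 'M[Zk]_dd) (b : 'I_t) : Zk :=
  Yat Z (r + b)%N - \sum_(s < r) ((phi (b, s) : nat)%:R * Yat Z s).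

Lemma graph_delta phi Z : (forall b, delta phi Z b = 0) -> graph phi Z.
Proof. by move=> h b; apply/eqP; rewrite -subr_eq0; apply/eqP/h. Qed.

Lemma YatB (Z1 Z2 : 'M[Zk]_dd) i : Yat (Z1 - Z2) i = Yat Z1 i - Yat Z2 i.
Proof. by rewrite /Yat !mxE. Qed.

Lemma deltaB phi Z1 Z2 b : delta phi (Z1 - Z2) b = delta phi Z1 b - delta phi Z2 b.
Proof.
rewrite /delta YatB.
rewrite (eq_bigr (fun s : 'I_r => (phi (b, s) : nat)%:R * Yat Z1 s - (phi (b, s) : nat)%:R * Yat Z2 s)); last first.
  by move=> s _; rewrite YatB mulrBr.
rewrite sumrB; ring.
Qed.

Definition qI (z : Zk) : Prop := exists u, z = q%:R * u.

Lemma qI_ord z : qI z -> exists w : 'I_q, z = q%:R * (w : nat)%:R.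
Proof.
case=> u ->.
have q0 : (0 < q)%N by rewrite expn_gt0 (ltnW p_gt1).
exists (Ordinal (ltn_pmod (val u) q0)) => /=.
have E : forall a, ((q * a) %% p ^ (m + m) = q * (a %% q))%N.
  by move=> a; rewrite expnD muln_modr.
by rewrite -{1}(natr_Zp u) -!natrM -Zp_nat_mod ?h2 // E.
Qed.

Lemma delta_q phi (A : M) : G1 A -> forall b, qI (delta phi (Y A) b).
Proof.
move=> gA b.
have yq : forall i : nat, qI (Yat (Y A) i) by move=> i; apply: Yq.
have Sq : qI (\sum_(s < r) ((phi (b, s) : nat)%:R * Yat (Y A) s)).
  apply: (big_ind qI); first by exists 0; rewrite mulr0.
    by move=> x y [u ->] [v ->]; exists (u + v); rewrite mulrDr.
  by move=> s _; have [u ->] := yq s; exists ((phi (b, s) : nat)%:R * u); rewrite mulrCA.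
have [u Eu] := yq (r + b)%N; case: Sq => v Ev.
by exists (u - v); rewrite /delta Eu Ev mulrBr.
Qed.


Definition Key := ({ffun 'I_dd * 'I_dd -> 'I_q} * {ffun 'I_t -> 'I_q})%type.

Definition rep (R : {ffun 'I_dd * 'I_dd -> 'I_q}) : M :=
  pick (fun g => inSL g /\ forall i j, zp_seq (g i j) m = (R (i, j) : nat)%:Z).

Definition pk2 phi (w : {ffun 'I_t -> 'I_q}) : M :=
  pick (fun g => [/\ inSL g, G1 g & forall b, delta phi (Y g) b = q%:R * (w b : nat)%:R]).

Definition Gk phi (k : Key) : M := rep k.1 *m pk2 phi k.2.

Lemma zp_ord (x : Zpadic p) : exists o : 'I_q, zp_seq x m = (o : nat)%:Z.
Proof.
have [x0 x1] := zp_range p_gt1 x m.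
have xq : (absz (zp_seq x m) < q)%N by rewrite -ltz_nat gez0_abs.
by exists (Ordinal xq) => /=; rewrite gez0_abs.
Qed.

Lemma G1_adj (g : M) : inSL g -> G1 g -> G1 (\adj g).
Proof.
move=> sg gg; have [_ e2 _] := adj_inv sg.
by rewrite /G1 -[map_mx _ _]mulmx1 -gg -map_mxM e2 map_mx1.
Qed.

Lemma Y_adj (g : M) : inSL g -> G1 g -> Y (\adj g) = - Y g.
Proof.
move=> sg gg; have [_ e2 _] := adj_inv sg.
apply/eqP; rewrite -addr_eq0 -Ymul ?e2 ?Y1 //; exact: G1_adj.
Qed.

Lemma Hgr_index phi : index_leSL (Hgr phi) #|{: Key}|.
Proof.
exists (fun i => Gk phi (enum_val i)); split.
  move=> i; rewrite /inSL /Gk det_mulmx.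
  rewrite (pick_SL (P := fun g => _ /\ _)); last by move=> x [].
  by rewrite (pick_SL (P := fun g => [/\ _, _ & _])) ?mulr1 //; move=> x [].
move=> A sA.
have /fin_all_exists [Rf ERf] : forall ij : 'I_dd * 'I_dd,
    exists o : 'I_q, zp_seq (A ij.1 ij.2) m = (o : nat)%:Z.
  by move=> ij; apply: zp_ord.
pose R := finfun Rf.
have exR : exists g : M, inSL g /\ forall i j, zp_seq (g i j) m = (R (i, j) : nat)%:Z.
  by exists A; split=> // i j; rewrite ffunE; exact: (ERf (i, j)).
have [sg1 eg1] := pickP exR.
set g1 := pick _ in sg1 eg1.
have [a1 a2 sa] := adj_inv sg1.
pose h1 := \adj g1 *m A.
have gh1 : G1 h1.
  have EA : map_mx r1 A = map_mx r1 g1.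
    by apply/matrixP => i j; rewrite !mxE /red eg1 ffunE -(ERf (i, j)).
  by rewrite /G1 /h1 map_mxM EA -map_mxM a2 map_mx1.
have sh1 : inSL h1 by rewrite /inSL det_mulmx sa sA mulr1.
have /fin_all_exists [Wf EWf] : forall b : 'I_t,
    exists w : 'I_q, delta phi (Y h1) b = q%:R * (w : nat)%:R.
  by move=> b; apply/qI_ord/delta_q.
pose W := finfun Wf.
have exW : exists g : M, [/\ inSL g, G1 g &
    forall b, delta phi (Y g) b = q%:R * (W b : nat)%:R].
  by exists h1; split=> // b; rewrite ffunE EWf.
have [sg2 gg2 dg2] := pickP exW.
set g2 := pick _ in sg2 gg2 dg2.
have [b1 b2 sb] := adj_inv sg2.
exists (enum_rank ((R, W) : Key)), (\adj g2 *m h1); rewrite enum_rankK.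
split; last first.
  change (A = g1 *m g2 *m (\adj g2 *m h1)).
  rewrite !mulmxA -(mulmxA g1 g2) b1 mulmx1 a1.
  by rewrite mul1mx.
split.
- by rewrite /inSL det_mulmx sb sh1 mulr1.
- by apply: G1mul => //; apply: G1_adj.
- rewrite Ymul //; last exact: G1_adj.
  rewrite Y_adj // addrC; apply: graph_delta => b.
  by rewrite deltaB dg2 -/g2 ffunE EWf subrr.
Qed.


Local Notation L := (@ord_max e).

Lemma cof_row (A B : M) j : (forall i k, i != L -> A i k = B i k) ->
  cofactor A L j = cofactor B L j.
Proof.
move=> h; rewrite /cofactor; congr (_ * _); congr determinant.
by apply/matrixP => a b; rewrite !mxE h // eq_sym neq_lift.
Qed.

Lemma test_elt (v : 'I_dd -> 'I_dd -> int) : exists A : M,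
  [/\ inSL A, G1 A & forall i j, (i, j) != (L, L) ->
       Y A i j = q%:R * (v i j)%:~R].
Proof.
pose B0 : M := \matrix_(i, j) ((((i == j) : nat)%:Z + q%:Z * v i j)%:~R).
have B0E : forall i j, B0 i j = ((((i == j) : nat)%:Z + q%:Z * v i j)%:~R).
  by move=> i j; rewrite mxE.
clearbody B0.
have rB0e : forall i j, r1 (B0 i j) = (i == j)%:R.
  move=> i j; rewrite B0E rmorph_int intrD intrM.
  have -> : ((q%:Z)%:~R : 'Z_q) = 0 by apply: (pchar_Zp h1).
  by rewrite mul0r addr0.
have rB0 : map_mx r1 B0 = 1%:M.
  by apply/matrixP => i j; rewrite !mxE rB0e.
have rB0_old : map_mx r1 B0 = 1%:M.
  apply/matrixP => i j; rewrite !mxE B0E rmorph_int intrD intrM.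
  have -> : ((q%:Z)%:~R : 'Z_q) = 0 by apply: (pchar_Zp h1).
  by rewrite mul0r addr0.
pose be := cofactor B0 L L.
have rbe : red h1 be = 1.
  rewrite -cofactor_map_mx rB0.
  have := congr1 (fun X : 'M['Z_q]_dd => X L L) (adj1 _ dd).
  by rewrite !mxE eqxx => ->.
have be1 : zp_seq be m = 1.
  have := @red_inj p p_gt1 m h1 be 1; rewrite rbe rmorph1 => /(_ erefl) ->.
  by rewrite /= modz_small // /pk ltz_nat h1.
have [y bey] := unit_zp pp m_gt0 be1.
pose al := \sum_(j | j != L) B0 L j * cofactor B0 L j.
pose z := (1 - al) * y.
pose A : M := \matrix_(i, j) (if (i == L) && (j == L) then z else B0 i j).
have cofA : forall j, cofactor A L j = cofactor B0 L j.
  move=> j; apply: cof_row => i k iL; rewrite mxE.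
  by move/negPf: iL => ->.
have dA : inSL A.
  rewrite /inSL (expand_det_row _ L) (bigD1 L) //= cofA mxE !eqxx /=.
  rewrite (eq_bigr (fun j => B0 L j * cofactor B0 L j)); last first.
    by move=> j jL; rewrite cofA mxE eqxx (negPf jL).
  by rewrite -/al -/be /z -mulrA [y * _]mulrC bey mulr1 subrK.
have rz : red h1 z = 1.
  have : \det (map_mx r1 A) = 1 by rewrite det_map_mx dA rmorph1.
  have -> : map_mx r1 A = diag_mx (\row_j (if j == L then red h1 z else 1)).
    apply/matrixP => i j; rewrite !mxE.
    case: (boolP (i == L)) => [/eqP ->|iL] /=.
      case: (boolP (j == L)) => [/eqP ->|jL]; first by rewrite eqxx.
      by rewrite rB0e eq_sym (negPf jL) mulr0n.
    by rewrite rB0e.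
  rewrite det_diag (bigD1 L) //= big1 ?mulr1 ?mxE ?eqxx //.
  by move=> i iL; rewrite mxE (negPf iL).
have z1 : zp_seq z m = 1.
  have := @red_inj p p_gt1 m h1 z 1; rewrite rz rmorph1 => /(_ erefl) ->.
  by rewrite /= modz_small // /pk ltz_nat h1.
exists A; split=> //.
  apply/matrixP => i j; rewrite !mxE.
  case: (boolP ((i == L) && (j == L))) => [/andP [/eqP -> /eqP ->]|nLL].
    by rewrite rz eqxx.
  by rewrite rB0e.
move=> i j ijL; rewrite /Y /rho !mxE.
have -> : ((i == L) && (j == L)) = false.
  by apply/negP => /andP [/eqP ei /eqP ej]; move: ijL; rewrite ei ej eqxx.
rewrite B0E rmorph_int intrD intrM.
by rewrite addrAC subrr add0r.
Qed.


Lemma posK i : (i < dd * dd)%N -> (((pos i).1 : nat) * dd + (pos i).2)%N = i.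
Proof.
move=> lt; rewrite /pos /= !inordK; first by rewrite -divn_eq.
  by rewrite ltn_pmod.
by rewrite ltn_divLR.
Qed.

Lemma pos_neq i : (i.+1 < dd * dd)%N -> pos i != (L, L).
Proof.
move=> lt; apply/negP => /eqP E.
have := posK (ltnW lt); rewrite E /= => Ei.
by move: lt; rewrite -Ei /=; nia.
Qed.

Hypothesis hrt : (r + t < dd * dd)%N.

Lemma qa_inj (a b : nat) : (a < q)%N -> (b < q)%N ->
  (q%:R : Zk) * a%:R = q%:R * b%:R -> a = b.
Proof.
move=> aq bq; rewrite -!natrM => /(congr1 (@nat_of_ord _)); rewrite !val_Zp_nat ?h2 //.
have q0 : (0 < q)%N by rewrite expn_gt0 (ltnW p_gt1).
rewrite !modn_small ?expnD ?ltn_pmul2l //.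
by move/eqP; rewrite eqn_pmul2l // => /eqP.
Qed.

Lemma Hgr_inj (phi psi : Phi) : Hgr phi = Hgr psi -> phi = psi.
Proof.
move=> E; apply/ffunP => -[b s0]; apply: val_inj => /=.
pose vf (x : nat) : int := ((x == s0) : nat)%:Z +
  \sum_(b' < t) (((r + b')%N == x) : nat)%:Z * (phi (b', s0) : nat)%:Z.
have vs : forall s : 'I_r, vf s = ((s == s0) : nat)%:Z.
  move=> s; rewrite /vf big1 ?addr0 // => b' _.
  by rewrite (_ : (r + b')%N == s = false) ?mul0r //; apply/negbTE; rewrite neq_ltn (ltn_addr _ (ltn_ord s)) orbT.
have vb : forall b1 : 'I_t, vf (r + b1)%N = (phi (b1, s0) : nat)%:Z.
  move=> b1; rewrite /vf (_ : (r + b1)%N == s0 = false) ?add0r; last first.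
    by apply/negbTE; rewrite neq_ltn (ltn_addr _ (ltn_ord s0)) orbT.
  rewrite (bigD1 b1) //= eqxx mul1r big1 ?addr0 // => b' nb.
  rewrite eqn_add2l; case: eqP => [/val_inj bb|_]; last by rewrite mul0r.
  by rewrite bb eqxx in nb.
have [A [sA gA YA]] := test_elt (fun i j => vf (i * dd + j)%N).
have Yx : forall x, (x < r + t)%N -> Yat (Y A) x = q%:R * (vf x)%:~R.
  move=> x xlt; rewrite /Yat YA; first by rewrite posK // (ltn_trans xlt).
  by rewrite -surjective_pairing pos_neq // (leq_ltn_trans xlt).
have t1 : ((true : nat)%:Z)%:~R = 1 :> Zk by [].
have ge : forall (f : Phi), (forall b1 : 'I_t, Yat (Y A) (r + b1)%N =
     \sum_(s < r) ((f (b1, s) : nat)%:R * Yat (Y A) s)) ->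
     (q%:R : Zk) * (phi (b, s0) : nat)%:R = q%:R * (f (b, s0) : nat)%:R.
  move=> f gf; have := gf b; rewrite Yx ?ltn_add2l // vb => ->.
  rewrite (bigD1 s0) //= big1 ?addr0.
    rewrite Yx; last exact: ltn_addr _ (ltn_ord s0).
    by rewrite vs eqxx t1 mulr1 mulrC.
  move=> s ns; rewrite Yx; last by rewrite (leq_trans (ltn_ord s)) ?leq_addr.
  by rewrite vs (negPf ns) !mulr0.
have Hphi : Hgr phi A.
  split=> // b1; rewrite Yx ?ltn_add2l // vb.
  rewrite (bigD1 s0) //= big1 ?addr0.
    rewrite Yx; last exact: ltn_addr _ (ltn_ord s0).
    by rewrite vs eqxx t1 mulr1 mulrC.
  move=> s ns; rewrite Yx; last by rewrite (leq_trans (ltn_ord s)) ?leq_addr.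
  by rewrite vs (negPf ns) !mulr0.
rewrite E in Hphi; case: Hphi => _ _ gpsi.
exact: (qa_inj (ltn_ord _) (ltn_ord _) (ge psi gpsi)).
Qed.

End Main.

Local Close Scope ring_scope.

Lemma INR_expn (a b : nat) : Raxioms.INR (a ^ b)%N = Rpow_def.pow (Raxioms.INR a) b.
Proof.
elim: b => [|b IH]; first by rewrite expn0.
by rewrite expnS mulnE RIneq.mult_INR IH.
Qed.

Lemma u_exists (D : nat) : (3 <= D)%N -> exists u : nat,
  [/\ (1 <= u)%N, (2 * D * D <= u * u)%N, ((u - 1) * (u - 1) < 2 * D * D)%N,
      (u <= 2 * D)%N & (D <= u)%N].
Proof.
move=> D3.
have ex : exists u, (2 * D * D <= u * u)%N by exists (2 * D); nia.
case: (ex_minnP ex) => u Pu minu.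
have u2 : (u <= 2 * D)%N by apply: minu; nia.
have u1 : (1 <= u)%N by case: u Pu {minu u2} => //=; nia.
exists u; split=> //.
  case: (ltnP ((u - 1) * (u - 1)) (2 * D * D)) => // h.
  by have := minu _ h; lia.
case: (leqP D u) => // h; nia.
Qed.

Theorem proposition6p5 (p d : nat) :
  prime p -> odd p -> (2 <= d)%N ->
  forall N : nat, exists n : nat, (N < n)%N /\
    exists (k : nat) (Hs : 'I_k -> ('M[Zpadic p]_d -> Prop)),
      injective Hs /\
      (forall i, open_subgroup_index_le (Hs i) n) /\
      Rdefinitions.Rle (Rpower.Rpower (Raxioms.INR n) (growth_exponent d))
                       (Raxioms.INR k).
Proof.
move=> pp _ d2 N.
case: d d2 => [//|e] d2.
have p1 := prime_gt1 pp.
pose D := (e.+1 * e.+1).-1.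
have hD : (e.+1 * e.+1 = D + 1)%N by rewrite /D; nia.
have D3 : (3 <= D)%N by rewrite /D; nia.
have [u [hu1 hu2 hu3 hu4 hu5]] := u_exists D3.
pose r := (2 * D - u)%N; pose t := (u - D)%N.
have hrt : (r + t < e.+1 * e.+1)%N by rewrite /r /t; lia.
pose m := N.+1.
have m0 : (0 < m)%N by [].
have cardK : #|{: Key p m e t}| = (p ^ (m * (e.+1 * e.+1 + t)))%N.
  by rewrite card_prod !card_ffun card_prod !card_ord -!expnM -expnD mulnDr.
have cardP : #|{: Phi p m r t}| = (p ^ (m * (t * r)))%N.
  by rewrite card_ffun card_prod !card_ord -expnM.
exists #|{: Key p m e t}|; split.
  rewrite cardK; apply: (ltn_trans (ltnSn N)); apply: (leq_trans (ltn_expl m p1)).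
  rewrite leq_pexp2l ?(ltnW p1) //.
  by rewrite leq_pmulr // addn_gt0 muln_gt0.
exists #|{: Phi p m r t}|, (fun i => Hgr pp m0 (enum_val i)); split; [|split].
- by move=> i j /(Hgr_inj hrt) /enum_val_inj.
- move=> i; split; [exact: Hgr_subgroup | exact: Hgr_open | exact: Hgr_index].
- rewrite cardK cardP !INR_expn; apply: RealPart.rpow_bound; first exact/ssrnat.ltP.
  exact: (RealPart.real_ineq e.+1 D u hD (ssrnat.leP hu1) (ssrnat.leP hu2) (ssrnat.ltP hu3) (ssrnat.leP hu4) (ssrnat.leP hu5)).
Qed.
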